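(* Let $R_0$ be a commutative Noetherian ring in which $2$ is a unit. Let $R_0[\mathbb Q]=R_0[a_{ij},\ell_{ij}\ (1\le i\le 2,1\le j\le 3),\psi_{12},\psi_{13},\psi_{23},z_1,z_2]$ be a polynomial ring in these $17$ indeterminates and let $\mathbb Q$ be the complex over $R_0[\mathbb Q]$ described below. Let $R_0[\mathbb M]=R_0[x_{ij},y_{ij}\ (1\le i<j\le 4),\ z_{ijk}\ (1\le i<j<k\le 4),\ t]$ be a polynomial ring in these $17$ indeterminates and let $\mathbb M$ be the complex over $R_0[\mathbb M]$ described below. Then there is a surjective $R_0$-algebra homomorphism $\mu:R_0[\mathbb Q]\to R_0[\mathbb M]$ such that the complexes $\mathbb Q\otimes_{R_0[\mathbb Q]}R_0[\mathbb M]$ and $\mathbb M$ are isomorphic.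
   Context: The complex $\mathbb Q$: $0\to R^2\xrightarrow{q_3}R^6\xrightarrow{q_2}R^5\xrightarrow{q_1}R$ (with $R=R_0[\mathbb Q]$). Write $A=(a_{ij})$, $L=(\ell_{ij})$ ($2\times 3$), $P=(\psi_{23},-\psi_{13},\psi_{12})^{\rm T}$, $N=\sum_{i=1}^3(a_{1i}\ell_{2i}-a_{2i}\ell_{1i})$. $q_1=[g_1\ g_2\ g_3\ g_4\ g_5]$ with $g_1=-\det\begin{bmatrix}\psi_{23}&-\psi_{13}&\psi_{12}\\ \ell_{11}&\ell_{12}&\ell_{13}\\ \ell_{21}&\ell_{22}&\ell_{23}\end{bmatrix}-z_2N-z_2z_1$, $g_2=P^{\rm T}A^{\rm T}\begin{bmatrix}\ell_{21}\\-\ell_{11}\end{bmatrix}-z_2(a_{12}a_{23}-a_{13}a_{22})+z_1\psi_{23}$, $g_3=P^{\rm T}A^{\rm T}\begin{bmatrix}\ell_{22}\\-\ell_{12}\end{bmatrix}+z_2(a_{11}a_{23}-a_{13}a_{21})-z_1\psi_{13}$, $g_4=P^{\rm T}A^{\rm T}\begin{bmatrix}\ell_{23}\\-\ell_{13}\end{bmatrix}-z_2(a_{11}a_{22}-a_{12}a_{21})+z_1\psi_{12}$, $g_5=-\det(AL^{\rm T})-z_1N-z_1^2$. $q_2$ ($5\times6$) has columns (rows 1 to 5): $C_1=(\psi_{12}a_{23}-\psi_{13}a_{22}+\psi_{23}a_{21},\ -\ell_{22}\psi_{12}-\ell_{23}\psi_{13}+z_2a_{21},\ \ell_{21}\psi_{12}-\ell_{23}\psi_{23}+z_2a_{22},\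 \ell_{21}\psi_{13}+\ell_{22}\psi_{23}+z_2a_{23},\ 0)$; $C_2=(-\psi_{12}a_{13}+\psi_{13}a_{12}-\psi_{23}a_{11},\ \psi_{12}\ell_{12}+\psi_{13}\ell_{13}-z_2a_{11},\ -\psi_{12}\ell_{11}+\psi_{23}\ell_{13}-z_2a_{12},\ -\psi_{13}\ell_{11}-\psi_{23}\ell_{12}-z_2a_{13},\ 0)$; $C_3=(z_1,\ \ell_{12}\ell_{23}-\ell_{13}\ell_{22},\ -(\ell_{11}\ell_{23}-\ell_{13}\ell_{21}),\ \ell_{11}\ell_{22}-\ell_{12}\ell_{21},\ -z_2)$; $C_4=(a_{12}a_{23}-a_{13}a_{22},\ -(a_{12}\ell_{22}-a_{22}\ell_{12})-(a_{13}\ell_{23}-a_{23}\ell_{13})-z_1,\ a_{12}\ell_{21}-a_{22}\ell_{11},\ a_{13}\ell_{21}-a_{23}\ell_{11},\ -\psi_{23})$; $C_5=(-(a_{11}a_{23}-a_{13}a_{21}),\ a_{11}\ell_{22}-a_{21}\ell_{12},\ -(a_{11}\ell_{21}-a_{21}\ell_{11})-(a_{13}\ell_{23}-a_{23}\ell_{13})-z_1,\ a_{13}\ell_{22}-a_{23}\ell_{12},\ \psi_{13})$; $C_6=(a_{11}a_{22}-a_{12}a_{21},\ a_{11}\ell_{23}-a_{21}\ell_{13},\ a_{12}\ell_{23}-a_{22}\ell_{13},\ -(a_{11}\ell_{21}-a_{21}\ell_{11})-(a_{12}\ell_{22}-a_{22}\ell_{12})-z_1,\ -\psi_{12})$. $q_3$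 ($6\times2$), rows (column 1; column 2): $(a_{11}\ell_{11}+a_{12}\ell_{12}+a_{13}\ell_{13};\ a_{11}\ell_{21}+a_{12}\ell_{22}+a_{13}\ell_{23}+z_1)$, $(a_{21}\ell_{11}+a_{22}\ell_{12}+a_{23}\ell_{13}-z_1;\ a_{21}\ell_{21}+a_{22}\ell_{22}+a_{23}\ell_{23})$, $(-a_{11}\psi_{23}+a_{12}\psi_{13}-a_{13}\psi_{12};\ -a_{21}\psi_{23}+a_{22}\psi_{13}-a_{23}\psi_{12})$, $(-\ell_{12}\psi_{12}-\ell_{13}\psi_{13}+z_2a_{11};\ -\ell_{22}\psi_{12}-\ell_{23}\psi_{13}+z_2a_{21})$, $(\ell_{11}\psi_{12}-\ell_{13}\psi_{23}+z_2a_{12};\ \ell_{21}\psi_{12}-\ell_{23}\psi_{23}+z_2a_{22})$, $(\ell_{11}\psi_{13}+\ell_{12}\psi_{23}+z_2a_{13};\ \ell_{21}\psi_{13}+\ell_{22}\psi_{23}+z_2a_{23})$. The complex $\mathbb M$: $0\to R^2\xrightarrow{m_3}R^6\xrightarrow{m_2}R^5\xrightarrow{m_1}R$ (with $R=R_0[\mathbb M]$). Put $D(ij,kl)=x_{ij}y_{kl}-x_{kl}y_{ij}$, $a=x_{12}x_{34}-x_{13}x_{24}+x_{14}x_{23}$, $b=x_{12}y_{34}-x_{13}y_{24}+x_{14}y_{23}+y_{12}x_{34}-y_{13}x_{24}+y_{14}x_{23}$, $c=y_{12}y_{34}-y_{13}y_{24}+y_{14}y_{23}$, $u=b^2-4ac$,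 $u_{123}=-2z_{234}D(12,13)+2z_{134}D(12,23)-2z_{124}D(13,23)+z_{123}(D(13,24)-D(12,34)+D(14,23))$, $u_{124}=2z_{234}D(12,14)-2z_{134}D(12,24)+z_{124}(D(12,34)+D(13,24)+D(14,23))-2z_{123}D(14,24)$, $u_{134}=2z_{234}D(13,14)+z_{134}(-D(12,34)-D(13,24)+D(14,23))+2z_{124}D(13,34)-2z_{123}D(14,34)$, $u_{234}=z_{234}(-D(12,34)+D(13,24)-D(14,23))-2z_{134}D(23,24)+2z_{124}D(23,34)-2z_{123}D(24,34)$. $m_1=[-u_{234}+tz_{234},\ -u_{134}+tz_{134},\ -u_{124}+tz_{124},\ -u_{123}-tz_{123},\ -u+t^2]$. $m_2$ ($5\times 6$) has columns (rows 1 to 5): $(-y_{12}z_{134}+y_{13}z_{124}-y_{14}z_{123},\ y_{12}z_{234}-y_{23}z_{124}+y_{24}z_{123},\ -y_{13}z_{234}+y_{23}z_{134}-y_{34}z_{123},\ -y_{14}z_{234}+y_{24}z_{134}-y_{34}z_{124},\ 0)$; $(-x_{12}z_{134}+x_{13}z_{124}-x_{14}z_{123},\ x_{12}z_{234}-x_{23}z_{124}+x_{24}z_{123},\ -x_{13}z_{234}+x_{23}z_{134}-x_{34}z_{123},\ -x_{14}z_{234}+x_{24}z_{134}-x_{34}z_{124},\ 0)$; $(-x_{12}y_{34}+x_{34}y_{12}+x_{13}y_{24}-x_{24}y_{13}-x_{14}y_{23}+x_{23}y_{14}+t,\ -2(x_{23}y_{24}-x_{24}y_{23}),\ 2(x_{23}y_{34}-x_{34}y_{23}),\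 2(x_{24}y_{34}-x_{34}y_{24}),\ -z_{234})$; $(2(x_{13}y_{14}-x_{14}y_{13}),\ -x_{12}y_{34}+x_{34}y_{12}-x_{13}y_{24}+x_{24}y_{13}+x_{14}y_{23}-x_{23}y_{14}+t,\ 2(x_{13}y_{34}-x_{34}y_{13}),\ 2(x_{14}y_{34}-x_{34}y_{14}),\ -z_{134})$; $(-2(x_{12}y_{14}-x_{14}y_{12}),\ 2(x_{12}y_{24}-x_{24}y_{12}),\ -x_{12}y_{34}+x_{34}y_{12}-x_{13}y_{24}+x_{24}y_{13}-x_{14}y_{23}+x_{23}y_{14}-t,\ -2(x_{14}y_{24}-x_{24}y_{14}),\ z_{124})$; $(-2(x_{12}y_{13}-x_{13}y_{12}),\ 2(x_{12}y_{23}-x_{23}y_{12}),\ -2(x_{13}y_{23}-x_{23}y_{13}),\ x_{12}y_{34}-x_{34}y_{12}-x_{13}y_{24}+x_{24}y_{13}-x_{14}y_{23}+x_{23}y_{14}+t,\ z_{123})$. $m_3$ ($6\times2$), rows (column 1; column 2): $(x_{12}y_{34}-x_{13}y_{24}+x_{14}y_{23}+x_{34}y_{12}-x_{24}y_{13}+x_{23}y_{14}+t;\ 2(x_{12}x_{34}-x_{13}x_{24}+x_{14}x_{23}))$, $(-2(y_{12}y_{34}-y_{13}y_{24}+y_{14}y_{23});\ -x_{12}y_{34}+x_{13}y_{24}-x_{14}y_{23}-x_{34}y_{12}+x_{24}y_{13}-x_{23}y_{14}+t)$, $(-(-y_{12}z_{134}+y_{13}z_{124}-y_{14}z_{123});\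 -(-x_{12}z_{134}+x_{13}z_{124}-x_{14}z_{123}))$, $(-y_{12}z_{234}+y_{23}z_{124}-y_{24}z_{123};\ -x_{12}z_{234}+x_{23}z_{124}-x_{24}z_{123})$, $(-y_{13}z_{234}+y_{23}z_{134}-y_{34}z_{123};\ -x_{13}z_{234}+x_{23}z_{134}-x_{34}z_{123})$, $(-(-y_{14}z_{234}+y_{24}z_{134}-y_{34}z_{124});\ -(-x_{14}z_{234}+x_{24}z_{134}-x_{34}z_{124}))$. An isomorphism of complexes means a family of isomorphisms of the modules in each degree commuting with the differentials. *)

(* Defs.v *)
From HB Require Import structures.
From mathcomp Require Import all_boot all_algebra.
From mathcomp Require Import mpoly.

Set Implicit Arguments.
Unset Strict Implicit.
Unset Printing Implicit Defensive.

Import GRing.Theory.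
Local Open Scope ring_scope.

Definition is_ideal (R : comNzRingType) (I : R -> Prop) : Prop :=
  [/\ I 0, (forall x y, I x -> I y -> I (x + y)) & (forall r x, I x -> I (r * x))].

Definition noetherian (R : comNzRingType) : Prop :=
  forall I : R -> Prop, is_ideal I ->
    exists s : seq R, forall x, I x <->
      exists c : 'I_(size s) -> R, x = \sum_(i < size s) c i * s`_i.

Definition is_alg_hom (R : comNzRingType) (n m : nat)
    (f : {mpoly R[n]} -> {mpoly R[m]}) : Prop :=
  [/\ forall p q, f (p + q) = f p + f q,
      forall p q, f (p * q) = f p * f q,
      f 1 = 1 &
      forall c : R, f c%:MP = c%:MP].

Definition mx_invertible (R : comNzRingType) (n : nat) (A : 'M[R]_n) : Prop :=
  exists B : 'M[R]_n, A *m B = 1%:M /\ B *m A = 1%:M.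

(* Two complexes 0 -> R^2 -d3-> R^6 -d2-> R^5 -d1-> R (maps acting on column
   vectors, d_i given by its matrix) are isomorphic: there are isomorphisms in
   each degree commuting with the differentials. *)
Definition cx_iso (R : comNzRingType)
    (d1 : 'M[R]_(1,5)) (d2 : 'M[R]_(5,6)) (d3 : 'M[R]_(6,2))
    (e1 : 'M[R]_(1,5)) (e2 : 'M[R]_(5,6)) (e3 : 'M[R]_(6,2)) : Prop :=
  exists (f0 : 'M[R]_1) (f1 : 'M[R]_5) (f2 : 'M[R]_6) (f3 : 'M[R]_2),
    [/\ mx_invertible f0, mx_invertible f1, mx_invertible f2, mx_invertible f3 &
    [/\ f0 *m d1 = e1 *m f1, f1 *m d2 = e2 *m f2 & f2 *m d3 = e3 *m f3]].

Definition mxs (R : comNzRingType) (m n : nat) (s : seq (seq R)) : 'M[R]_(m, n) :=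
  \matrix_(i < m, j < n) (nth [::] s i)`_j.

Section Complexes.
Variable R : comNzRingType.
Local Notation P := {mpoly R[17]}.

(* Variables of R0[Q], indexed 0..16: a_ij, l_ij (= ell_ij), p_ij (= psi_ij), z1, z2 *)

Definition a11 : P := 'X_(inord 0).
Definition a12 : P := 'X_(inord 1).
Definition a13 : P := 'X_(inord 2).
Definition a21 : P := 'X_(inord 3).
Definition a22 : P := 'X_(inord 4).
Definition a23 : P := 'X_(inord 5).
Definition l11 : P := 'X_(inord 6).
Definition l12 : P := 'X_(inord 7).
Definition l13 : P := 'X_(inord 8).
Definition l21 : P := 'X_(inord 9).
Definition l22 : P := 'X_(inord 10).
Definition l23 : P := 'X_(inord 11).
Definition p12 : P := 'X_(inord 12).
Definition p13 : P := 'X_(inord 13).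
Definition p23 : P := 'X_(inord 14).
Definition z1 : P := 'X_(inord 15).
Definition z2 : P := 'X_(inord 16).

(* Variables of R0[M], indexed 0..16: x_ij, y_ij, z_ijk, t *)
Definition x12 : P := 'X_(inord 0).
Definition x13 : P := 'X_(inord 1).
Definition x14 : P := 'X_(inord 2).
Definition x23 : P := 'X_(inord 3).
Definition x24 : P := 'X_(inord 4).
Definition x34 : P := 'X_(inord 5).
Definition y12 : P := 'X_(inord 6).
Definition y13 : P := 'X_(inord 7).
Definition y14 : P := 'X_(inord 8).
Definition y23 : P := 'X_(inord 9).
Definition y24 : P := 'X_(inord 10).
Definition y34 : P := 'X_(inord 11).
Definition z123 : P := 'X_(inord 12).
Definition z124 : P := 'X_(inord 13).
Definition z134 : P := 'X_(inord 14).
Definition z234 : P := 'X_(inord 15).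
Definition t : P := 'X_(inord 16).

Definition NQ : P := (a11*l21 - a21*l11 + a12*l22 - a22*l12 + a13*l23 - a23*l13).

Definition Qd1 : 'M[P]_(1,5) := mxs 1 5
  [:: [:: -(p23*(l12*l23 - l13*l22) + p13*(l11*l23 - l13*l21) + p12*(l11*l22 - l12*l21)) - z2*NQ - z2*z1; p23*(a11*l21 - a21*l11) - p13*(a12*l21 - a22*l11) + p12*(a13*l21 - a23*l11) - z2*(a12*a23 - a13*a22) + z1*p23; p23*(a11*l22 - a21*l12) - p13*(a12*l22 - a22*l12) + p12*(a13*l22 - a23*l12) + z2*(a11*a23 - a13*a21) - z1*p13; p23*(a11*l23 - a21*l13) - p13*(a12*l23 - a22*l13) + p12*(a13*l23 - a23*l13) - z2*(a11*a22 - a12*a21) + z1*p12; -((a11*l11 + a12*l12 + a13*l13)*(a21*l21 + a22*l22 + a23*l23) - (a11*l21 + a12*l22 + a13*l23)*(a21*l11 + a22*l12 + a23*l13)) - z1*NQ - z1*z1]].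
(* q2 given by its columns C1..C6 *)
Definition Qd2 : 'M[P]_(5,6) := (mxs 6 5
  [:: [:: p12*a23 - p13*a22 + p23*a21; -l22*p12 - l23*p13 + z2*a21; l21*p12 - l23*p23 + z2*a22; l21*p13 + l22*p23 + z2*a23; 0];
   [:: -p12*a13 + p13*a12 - p23*a11; p12*l12 + p13*l13 - z2*a11; -p12*l11 + p23*l13 - z2*a12; -p13*l11 - p23*l12 - z2*a13; 0];
   [:: z1; l12*l23 - l13*l22; -(l11*l23 - l13*l21); l11*l22 - l12*l21; -z2];
   [:: a12*a23 - a13*a22; -(a12*l22 - a22*l12) - (a13*l23 - a23*l13) - z1; a12*l21 - a22*l11; a13*l21 - a23*l11; -p23];
   [:: -(a11*a23 - a13*a21); a11*l22 - a21*l12; -(a11*l21 - a21*l11) - (a13*l23 - a23*l13) - z1; a13*l22 - a23*l12; p13];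
   [:: a11*a22 - a12*a21; a11*l23 - a21*l13; a12*l23 - a22*l13; -(a11*l21 - a21*l11) - (a12*l22 - a22*l12) - z1; -p12]])^T.
Definition Qd3 : 'M[P]_(6,2) := mxs 6 2
  [:: [:: a11*l11 + a12*l12 + a13*l13; a11*l21 + a12*l22 + a13*l23 + z1];
   [:: a21*l11 + a22*l12 + a23*l13 - z1; a21*l21 + a22*l22 + a23*l23];
   [:: -a11*p23 + a12*p13 - a13*p12; -a21*p23 + a22*p13 - a23*p12];
   [:: -l12*p12 - l13*p13 + z2*a11; -l22*p12 - l23*p13 + z2*a21];
   [:: l11*p12 - l13*p23 + z2*a12; l21*p12 - l23*p23 + z2*a22];
   [:: l11*p13 + l12*p23 + z2*a13; l21*p13 + l22*p23 + z2*a23]].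

(* D(ij,kl) = x_ij y_kl - x_kl y_ij, written Dm x_ij y_ij x_kl y_kl *)
Definition Dm (xi yi xk yk : P) : P := xi * yk - xk * yi.
Definition ma : P := x12*x34 - x13*x24 + x14*x23.
Definition mb : P := x12*y34 - x13*y24 + x14*y23 + y12*x34 - y13*x24 + y14*x23.
Definition mc : P := y12*y34 - y13*y24 + y14*y23.
Definition mu : P := mb*mb - 4*ma*mc.
Definition u123 : P := -2*z234*(Dm x12 y12 x13 y13) + 2*z134*(Dm x12 y12 x23 y23) - 2*z124*(Dm x13 y13 x23 y23) + z123*((Dm x13 y13 x24 y24) - (Dm x12 y12 x34 y34) + (Dm x14 y14 x23 y23)).
Definition u124 : P := 2*z234*(Dm x12 y12 x14 y14) - 2*z134*(Dm x12 y12 x24 y24) + z124*((Dm x12 y12 x34 y34) + (Dm x13 y13 x24 y24) + (Dm x14 y14 x23 y23)) - 2*z123*(Dm x14 y14 x24 y24).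
Definition u134 : P := 2*z234*(Dm x13 y13 x14 y14) + z134*(-(Dm x12 y12 x34 y34) - (Dm x13 y13 x24 y24) + (Dm x14 y14 x23 y23)) + 2*z124*(Dm x13 y13 x34 y34) - 2*z123*(Dm x14 y14 x34 y34).
Definition u234 : P := z234*(-(Dm x12 y12 x34 y34) + (Dm x13 y13 x24 y24) - (Dm x14 y14 x23 y23)) - 2*z134*(Dm x23 y23 x24 y24) + 2*z124*(Dm x23 y23 x34 y34) - 2*z123*(Dm x24 y24 x34 y34).

Definition Md1 : 'M[P]_(1,5) := mxs 1 5
  [:: [:: -u234 + t*z234; -u134 + t*z134; -u124 + t*z124; -u123 - t*z123; -mu + t*t]].
(* m2 given by its columns *)
Definition Md2 : 'M[P]_(5,6) := (mxs 6 5
  [:: [:: -y12*z134 + y13*z124 - y14*z123; y12*z234 - y23*z124 + y24*z123; -y13*z234 + y23*z134 - y34*z123; -y14*z234 + y24*z134 - y34*z124; 0];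
   [:: -x12*z134 + x13*z124 - x14*z123; x12*z234 - x23*z124 + x24*z123; -x13*z234 + x23*z134 - x34*z123; -x14*z234 + x24*z134 - x34*z124; 0];
   [:: -x12*y34 + x34*y12 + x13*y24 - x24*y13 - x14*y23 + x23*y14 + t; -2*(x23*y24 - x24*y23); 2*(x23*y34 - x34*y23); 2*(x24*y34 - x34*y24); -z234];
   [:: 2*(x13*y14 - x14*y13); -x12*y34 + x34*y12 - x13*y24 + x24*y13 + x14*y23 - x23*y14 + t; 2*(x13*y34 - x34*y13); 2*(x14*y34 - x34*y14); -z134];
   [:: -2*(x12*y14 - x14*y12); 2*(x12*y24 - x24*y12); -x12*y34 + x34*y12 - x13*y24 + x24*y13 - x14*y23 + x23*y14 - t; -2*(x14*y24 - x24*y14); z124];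
   [:: -2*(x12*y13 - x13*y12); 2*(x12*y23 - x23*y12); -2*(x13*y23 - x23*y13); x12*y34 - x34*y12 - x13*y24 + x24*y13 - x14*y23 + x23*y14 + t; z123]])^T.
Definition Md3 : 'M[P]_(6,2) := mxs 6 2
  [:: [:: x12*y34 - x13*y24 + x14*y23 + x34*y12 - x24*y13 + x23*y14 + t; 2*(x12*x34 - x13*x24 + x14*x23)];
   [:: -2*(y12*y34 - y13*y24 + y14*y23); -x12*y34 + x13*y24 - x14*y23 - x34*y12 + x24*y13 - x23*y14 + t];
   [:: -(-y12*z134 + y13*z124 - y14*z123); -(-x12*z134 + x13*z124 - x14*z123)];
   [:: -y12*z234 + y23*z124 - y24*z123; -x12*z234 + x23*z124 - x24*z123];
   [:: -y13*z234 + y23*z134 - y34*z123; -x13*z234 + x23*z134 - x34*z123];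
   [:: -(-y14*z234 + y24*z134 - y34*z124); -(-x14*z234 + x24*z134 - x34*z124)]].

End Complexes.

(* Main.v *)
Require Import Defs.
From HB Require Import structures.
From mathcomp Require Import all_boot all_algebra.
From mathcomp Require Import mpoly.
From mathcomp Require Import ring.
Import GRing.Theory.
Local Open Scope ring_scope.

Arguments a11 : simpl never. Arguments a12 : simpl never. Arguments a13 : simpl never.
Arguments a21 : simpl never. Arguments a22 : simpl never. Arguments a23 : simpl never.
Arguments l11 : simpl never. Arguments l12 : simpl never. Arguments l13 : simpl never.
Arguments l21 : simpl never. Arguments l22 : simpl never. Arguments l23 : simpl never.
Arguments p12 : simpl never. Arguments p13 : simpl never. Arguments p23 : simpl never.
Arguments z1 : simpl never. Arguments z2 : simpl never.
Arguments x12 : simpl never. Arguments x13 : simpl never. Arguments x14 : simpl never.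
Arguments x23 : simpl never. Arguments x24 : simpl never. Arguments x34 : simpl never.
Arguments y12 : simpl never. Arguments y13 : simpl never. Arguments y14 : simpl never.
Arguments y23 : simpl never. Arguments y24 : simpl never. Arguments y34 : simpl never.
Arguments z123 : simpl never. Arguments z124 : simpl never. Arguments z134 : simpl never.
Arguments z234 : simpl never. Arguments t : simpl never.


Ltac ordcase i := let Hi := fresh "Hi" in
  case: i => [[|[|[|[|[|[|[|i]]]]]]] Hi];
  try (exfalso; move: Hi; rewrite !ltnS ltn0; done).

Definition NQg {S : comNzRingType} (a11 a12 a13 a21 a22 a23 l11 l12 l13 l21 l22 l23 p12 p13 p23 z1 z2 : S) : S := (a11*l21 - a21*l11 + a12*l22 - a22*l12 + a13*l23 - a23*l13).
Definition QD1g {S : comNzRingType} (a11 a12 a13 a21 a22 a23 l11 l12 l13 l21 l22 l23 p12 p13 p23 z1 z2 : S) : 'M[S]_(1,5) := mxs 1 5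
  [:: [:: -(p23*(l12*l23 - l13*l22) + p13*(l11*l23 - l13*l21) + p12*(l11*l22 - l12*l21)) - z2*(NQg a11 a12 a13 a21 a22 a23 l11 l12 l13 l21 l22 l23 p12 p13 p23 z1 z2) - z2*z1; p23*(a11*l21 - a21*l11) - p13*(a12*l21 - a22*l11) + p12*(a13*l21 - a23*l11) - z2*(a12*a23 - a13*a22) + z1*p23; p23*(a11*l22 - a21*l12) - p13*(a12*l22 - a22*l12) + p12*(a13*l22 - a23*l12) + z2*(a11*a23 - a13*a21) - z1*p13; p23*(a11*l23 - a21*l13) - p13*(a12*l23 - a22*l13) + p12*(a13*l23 - a23*l13) - z2*(a11*a22 - a12*a21) + z1*p12; -((a11*l11 + a12*l12 + a13*l13)*(a21*l21 + a22*l22 + a23*l23) - (a11*l21 + a12*l22 + a13*l23)*(a21*l11 + a22*l12 + a23*l13)) - z1*(NQg a11 a12 a13 a21 a22 a23 l11 l12 l13 l21 l22 l23 p12 p13 p23 z1 z2) - z1*z1]].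
Definition QD2g {S : comNzRingType} (a11 a12 a13 a21 a22 a23 l11 l12 l13 l21 l22 l23 p12 p13 p23 z1 z2 : S) : 'M[S]_(5,6) := (mxs 6 5
  [:: [:: p12*a23 - p13*a22 + p23*a21; -l22*p12 - l23*p13 + z2*a21; l21*p12 - l23*p23 + z2*a22; l21*p13 + l22*p23 + z2*a23; 0];
   [:: -p12*a13 + p13*a12 - p23*a11; p12*l12 + p13*l13 - z2*a11; -p12*l11 + p23*l13 - z2*a12; -p13*l11 - p23*l12 - z2*a13; 0];
   [:: z1; l12*l23 - l13*l22; -(l11*l23 - l13*l21); l11*l22 - l12*l21; -z2];
   [:: a12*a23 - a13*a22; -(a12*l22 - a22*l12) - (a13*l23 - a23*l13) - z1; a12*l21 - a22*l11; a13*l21 - a23*l11; -p23];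
   [:: -(a11*a23 - a13*a21); a11*l22 - a21*l12; -(a11*l21 - a21*l11) - (a13*l23 - a23*l13) - z1; a13*l22 - a23*l12; p13];
   [:: a11*a22 - a12*a21; a11*l23 - a21*l13; a12*l23 - a22*l13; -(a11*l21 - a21*l11) - (a12*l22 - a22*l12) - z1; -p12]])^T.
Definition QD3g {S : comNzRingType} (a11 a12 a13 a21 a22 a23 l11 l12 l13 l21 l22 l23 p12 p13 p23 z1 z2 : S) : 'M[S]_(6,2) := mxs 6 2
  [:: [:: a11*l11 + a12*l12 + a13*l13; a11*l21 + a12*l22 + a13*l23 + z1];
   [:: a21*l11 + a22*l12 + a23*l13 - z1; a21*l21 + a22*l22 + a23*l23];
   [:: -a11*p23 + a12*p13 - a13*p12; -a21*p23 + a22*p13 - a23*p12];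
   [:: -l12*p12 - l13*p13 + z2*a11; -l22*p12 - l23*p13 + z2*a21];
   [:: l11*p12 - l13*p23 + z2*a12; l21*p12 - l23*p23 + z2*a22];
   [:: l11*p13 + l12*p23 + z2*a13; l21*p13 + l22*p23 + z2*a23]].

Lemma map_QD1g (S T : comNzRingType) (f : {rmorphism S -> T}) (a11 a12 a13 a21 a22 a23 l11 l12 l13 l21 l22 l23 p12 p13 p23 z1 z2 : S) :
  map_mx f (QD1g a11 a12 a13 a21 a22 a23 l11 l12 l13 l21 l22 l23 p12 p13 p23 z1 z2) = QD1g (f a11) (f a12) (f a13) (f a21) (f a22) (f a23) (f l11) (f l12) (f l13) (f l21) (f l22) (f l23) (f p12) (f p13) (f p23) (f z1) (f z2).
Proof. apply/matrixP => i j; rewrite !mxE; ordcase i; ordcase j; rewrite /= /NQg; ring. Qed.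
Lemma map_QD2g (S T : comNzRingType) (f : {rmorphism S -> T}) (a11 a12 a13 a21 a22 a23 l11 l12 l13 l21 l22 l23 p12 p13 p23 z1 z2 : S) :
  map_mx f (QD2g a11 a12 a13 a21 a22 a23 l11 l12 l13 l21 l22 l23 p12 p13 p23 z1 z2) = QD2g (f a11) (f a12) (f a13) (f a21) (f a22) (f a23) (f l11) (f l12) (f l13) (f l21) (f l22) (f l23) (f p12) (f p13) (f p23) (f z1) (f z2).
Proof. apply/matrixP => i j; rewrite !mxE; ordcase i; ordcase j; rewrite /= /NQg; ring. Qed.
Lemma map_QD3g (S T : comNzRingType) (f : {rmorphism S -> T}) (a11 a12 a13 a21 a22 a23 l11 l12 l13 l21 l22 l23 p12 p13 p23 z1 z2 : S) :
  map_mx f (QD3g a11 a12 a13 a21 a22 a23 l11 l12 l13 l21 l22 l23 p12 p13 p23 z1 z2) = QD3g (f a11) (f a12) (f a13) (f a21) (f a22) (f a23) (f l11) (f l12) (f l13) (f l21) (f l22) (f l23) (f p12) (f p13) (f p23) (f z1) (f z2).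
Proof. apply/matrixP => i j; rewrite !mxE; ordcase i; ordcase j; rewrite /= /NQg; ring. Qed.

Section Main.
Variable R : comNzRingType.
Local Notation P := {mpoly R[17]}.

Definition muT : 17.-tuple P :=
  [tuple x14 R; x24 R; x34 R; y14 R; y24 R; y34 R;
         2 * x23 R; 2 * - x13 R; 2 * x12 R; 2 * y23 R; 2 * - y13 R; 2 * y12 R;
         z124 R; z134 R; z234 R;
         t R - (x14 R * y23 R - x24 R * y13 R + x34 R * y12 R)
             + (y14 R * x23 R - y24 R * x13 R + y34 R * x12 R);
         2 * - z123 R].

Arguments comp_mpoly : simpl never.
Notation muF := (comp_mpoly muT).

Lemma muC c : muF c%:MP = c%:MP. Proof. exact: comp_mpolyC. Qed.

Ltac mv := rewrite comp_mpolyXU inordK.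
Lemma mu_a11 : muF (a11 R) = x14 R. Proof. by mv. Qed.
Lemma mu_a11' : (muF : {rmorphism P -> P}) (a11 R) = x14 R. Proof. exact: mu_a11. Qed.
Lemma mu_a12 : muF (a12 R) = x24 R. Proof. by mv. Qed.
Lemma mu_a12' : (muF : {rmorphism P -> P}) (a12 R) = x24 R. Proof. exact: mu_a12. Qed.
Lemma mu_a13 : muF (a13 R) = x34 R. Proof. by mv. Qed.
Lemma mu_a13' : (muF : {rmorphism P -> P}) (a13 R) = x34 R. Proof. exact: mu_a13. Qed.
Lemma mu_a21 : muF (a21 R) = y14 R. Proof. by mv. Qed.
Lemma mu_a21' : (muF : {rmorphism P -> P}) (a21 R) = y14 R. Proof. exact: mu_a21. Qed.
Lemma mu_a22 : muF (a22 R) = y24 R. Proof. by mv. Qed.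
Lemma mu_a22' : (muF : {rmorphism P -> P}) (a22 R) = y24 R. Proof. exact: mu_a22. Qed.
Lemma mu_a23 : muF (a23 R) = y34 R. Proof. by mv. Qed.
Lemma mu_a23' : (muF : {rmorphism P -> P}) (a23 R) = y34 R. Proof. exact: mu_a23. Qed.
Lemma mu_l11 : muF (l11 R) = 2 * x23 R. Proof. by mv. Qed.
Lemma mu_l11' : (muF : {rmorphism P -> P}) (l11 R) = 2 * x23 R. Proof. exact: mu_l11. Qed.
Lemma mu_l12 : muF (l12 R) = 2 * - x13 R. Proof. by mv. Qed.
Lemma mu_l12' : (muF : {rmorphism P -> P}) (l12 R) = 2 * - x13 R. Proof. exact: mu_l12. Qed.
Lemma mu_l13 : muF (l13 R) = 2 * x12 R. Proof. by mv. Qed.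
Lemma mu_l13' : (muF : {rmorphism P -> P}) (l13 R) = 2 * x12 R. Proof. exact: mu_l13. Qed.
Lemma mu_l21 : muF (l21 R) = 2 * y23 R. Proof. by mv. Qed.
Lemma mu_l21' : (muF : {rmorphism P -> P}) (l21 R) = 2 * y23 R. Proof. exact: mu_l21. Qed.
Lemma mu_l22 : muF (l22 R) = 2 * - y13 R. Proof. by mv. Qed.
Lemma mu_l22' : (muF : {rmorphism P -> P}) (l22 R) = 2 * - y13 R. Proof. exact: mu_l22. Qed.
Lemma mu_l23 : muF (l23 R) = 2 * y12 R. Proof. by mv. Qed.
Lemma mu_l23' : (muF : {rmorphism P -> P}) (l23 R) = 2 * y12 R. Proof. exact: mu_l23. Qed.
Lemma mu_p12 : muF (p12 R) = z124 R. Proof. by mv. Qed.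
Lemma mu_p12' : (muF : {rmorphism P -> P}) (p12 R) = z124 R. Proof. exact: mu_p12. Qed.
Lemma mu_p13 : muF (p13 R) = z134 R. Proof. by mv. Qed.
Lemma mu_p13' : (muF : {rmorphism P -> P}) (p13 R) = z134 R. Proof. exact: mu_p13. Qed.
Lemma mu_p23 : muF (p23 R) = z234 R. Proof. by mv. Qed.
Lemma mu_p23' : (muF : {rmorphism P -> P}) (p23 R) = z234 R. Proof. exact: mu_p23. Qed.
Lemma mu_z1 : muF (z1 R) = t R - (x14 R * y23 R - x24 R * y13 R + x34 R * y12 R)
             + (y14 R * x23 R - y24 R * x13 R + y34 R * x12 R). Proof. by mv. Qed.
Lemma mu_z1' : (muF : {rmorphism P -> P}) (z1 R) = t R - (x14 R * y23 R - x24 R * y13 R + x34 R * y12 R)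
             + (y14 R * x23 R - y24 R * x13 R + y34 R * x12 R). Proof. exact: mu_z1. Qed.
Lemma mu_z2 : muF (z2 R) = 2 * - z123 R. Proof. by mv. Qed.
Lemma mu_z2' : (muF : {rmorphism P -> P}) (z2 R) = 2 * - z123 R. Proof. exact: mu_z2. Qed.


Definition F0 : 'M[P]_1 := 1%:M.
Definition F1 : 'M[P]_5 := mxs 5 5
  [:: [:: 0; 1; 0; 0; 0]; [:: 0; 0; -1; 0; 0]; [:: 0; 0; 0; 1; 0];
      [:: -2; 0; 0; 0; 0]; [:: 0; 0; 0; 0; -1]].
Definition F2 : 'M[P]_6 := mxs 6 6
  [:: [:: 2; 0; 0; 0; 0; 0]; [:: 0; -2; 0; 0; 0; 0]; [:: 0; 0; 0; -1; 0; 0];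
      [:: 0; 0; 0; 0; 1; 0]; [:: 0; 0; 0; 0; 0; 1]; [:: 0; 0; -2; 0; 0; 0]].
Definition F3 : 'M[P]_2 := mxs 2 2 [:: [:: 0; 2]; [:: 2; 0]].

Lemma Qd1E : Qd1 R = QD1g (a11 R) (a12 R) (a13 R) (a21 R) (a22 R) (a23 R) (l11 R) (l12 R) (l13 R) (l21 R) (l22 R) (l23 R) (p12 R) (p13 R) (p23 R) (z1 R) (z2 R). Proof. by []. Qed.
Lemma Qd2E : Qd2 R = QD2g (a11 R) (a12 R) (a13 R) (a21 R) (a22 R) (a23 R) (l11 R) (l12 R) (l13 R) (l21 R) (l22 R) (l23 R) (p12 R) (p13 R) (p23 R) (z1 R) (z2 R). Proof. by []. Qed.
Lemma Qd3E : Qd3 R = QD3g (a11 R) (a12 R) (a13 R) (a21 R) (a22 R) (a23 R) (l11 R) (l12 R) (l13 R) (l21 R) (l22 R) (l23 R) (p12 R) (p13 R) (p23 R) (z1 R) (z2 R). Proof. by []. Qed.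

Lemma muQ1 : map_mx muF (Qd1 R) = QD1g (x14 R) (x24 R) (x34 R) (y14 R) (y24 R) (y34 R) (2 * x23 R) (2 * - x13 R) (2 * x12 R) (2 * y23 R) (2 * - y13 R) (2 * y12 R) (z124 R) (z134 R) (z234 R) (t R - (x14 R * y23 R - x24 R * y13 R + x34 R * y12 R) + (y14 R * x23 R - y24 R * x13 R + y34 R * x12 R)) (2 * - z123 R).
Proof. by rewrite Qd1E map_QD1g mu_a11' mu_a12' mu_a13' mu_a21' mu_a22' mu_a23' mu_l11' mu_l12' mu_l13' mu_l21' mu_l22' mu_l23' mu_p12' mu_p13' mu_p23' mu_z1' mu_z2'. Qed.
Lemma muQ2 : map_mx muF (Qd2 R) = QD2g (x14 R) (x24 R) (x34 R) (y14 R) (y24 R) (y34 R) (2 * x23 R) (2 * - x13 R) (2 * x12 R) (2 * y23 R) (2 * - y13 R) (2 * y12 R) (z124 R) (z134 R) (z234 R) (t R - (x14 R * y23 R - x24 R * y13 R + x34 R * y12 R) + (y14 R * x23 R - y24 R * x13 R + y34 R * x12 R)) (2 * - z123 R).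
Proof. by rewrite Qd2E map_QD2g mu_a11' mu_a12' mu_a13' mu_a21' mu_a22' mu_a23' mu_l11' mu_l12' mu_l13' mu_l21' mu_l22' mu_l23' mu_p12' mu_p13' mu_p23' mu_z1' mu_z2'. Qed.
Lemma muQ3 : map_mx muF (Qd3 R) = QD3g (x14 R) (x24 R) (x34 R) (y14 R) (y24 R) (y34 R) (2 * x23 R) (2 * - x13 R) (2 * x12 R) (2 * y23 R) (2 * - y13 R) (2 * y12 R) (z124 R) (z134 R) (z234 R) (t R - (x14 R * y23 R - x24 R * y13 R + x34 R * y12 R) + (y14 R * x23 R - y24 R * x13 R + y34 R * x12 R)) (2 * - z123 R).
Proof. by rewrite Qd3E map_QD3g mu_a11' mu_a12' mu_a13' mu_a21' mu_a22' mu_a23' mu_l11' mu_l12' mu_l13' mu_l21' mu_l22' mu_l23' mu_p12' mu_p13' mu_p23' mu_z1' mu_z2'. Qed.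

Ltac ordT := case=> [[|[|[|[|[|[|[|?]]]]]]] ?];
  try (exfalso; match goal with H : is_true (_ < _)%N |- _ => move: H; rewrite !ltnS ltn0; done end).
Lemma eq1 : F0 *m QD1g (x14 R) (x24 R) (x34 R) (y14 R) (y24 R) (y34 R) (2 * x23 R) (2 * - x13 R) (2 * x12 R) (2 * y23 R) (2 * - y13 R) (2 * y12 R) (z124 R) (z134 R) (z234 R) (t R - (x14 R * y23 R - x24 R * y13 R + x34 R * y12 R) + (y14 R * x23 R - y24 R * x13 R + y34 R * x12 R)) (2 * - z123 R) = Md1 R *m F1.
Proof. apply/matrixP => i j; rewrite !mxE !big_ord_recl !big_ord0 !mxE; move: i j; ordT; ordT; rewrite /=;
  rewrite /u234 /u134 /u124 /u123 /mu /ma /mb /mc /Dm /NQg; ring. Qed.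
Lemma eq2 : F1 *m QD2g (x14 R) (x24 R) (x34 R) (y14 R) (y24 R) (y34 R) (2 * x23 R) (2 * - x13 R) (2 * x12 R) (2 * y23 R) (2 * - y13 R) (2 * y12 R) (z124 R) (z134 R) (z234 R) (t R - (x14 R * y23 R - x24 R * y13 R + x34 R * y12 R) + (y14 R * x23 R - y24 R * x13 R + y34 R * x12 R)) (2 * - z123 R) = Md2 R *m F2.
Proof. apply/matrixP => i j; rewrite !mxE !big_ord_recl !big_ord0 !mxE; move: i j; ordT; ordT; rewrite /=;
  rewrite /u234 /u134 /u124 /u123 /mu /ma /mb /mc /Dm /NQg; ring. Qed.
Lemma eq3 : F2 *m QD3g (x14 R) (x24 R) (x34 R) (y14 R) (y24 R) (y34 R) (2 * x23 R) (2 * - x13 R) (2 * x12 R) (2 * y23 R) (2 * - y13 R) (2 * y12 R) (z124 R) (z134 R) (z234 R) (t R - (x14 R * y23 R - x24 R * y13 R + x34 R * y12 R) + (y14 R * x23 R - y24 R * x13 R + y34 R * x12 R)) (2 * - z123 R) = Md3 R *m F3.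
Proof. apply/matrixP => i j; rewrite !mxE !big_ord_recl !big_ord0 !mxE; move: i j; ordT; ordT; rewrite /=;
  rewrite /u234 /u134 /u124 /u123 /mu /ma /mb /mc /Dm /NQg; ring. Qed.

Lemma inv_from (n : nat) (A B : 'M[P]_n) (W : P) : 2 * W = 1 ->
  A *m B = (2 * W)%:M -> B *m A = (2 * W)%:M -> mx_invertible A.
Proof. by move=> hW h1 h2; exists B; rewrite h1 h2 hW. Qed.

Definition G1 (W : P) : 'M[P]_5 := mxs 5 5
  [:: [:: 0; 0; 0; -W; 0]; [:: 2*W; 0; 0; 0; 0]; [:: 0; -(2*W); 0; 0; 0];
      [:: 0; 0; 2*W; 0; 0]; [:: 0; 0; 0; 0; -(2*W)]].
Definition G2 (W : P) : 'M[P]_6 := mxs 6 6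
  [:: [:: W; 0; 0; 0; 0; 0]; [:: 0; -W; 0; 0; 0; 0]; [:: 0; 0; 0; 0; 0; -W];
      [:: 0; 0; -(2*W); 0; 0; 0]; [:: 0; 0; 0; 2*W; 0; 0]; [:: 0; 0; 0; 0; 2*W; 0]].
Definition G3 (W : P) : 'M[P]_2 := mxs 2 2 [:: [:: 0; W]; [:: W; 0]].


Lemma F1inv (W : P) : 2 * W = 1 -> mx_invertible F1.
Proof.
move=> hW; apply: (@inv_from _ _ (G1 W) W hW).
- apply/matrixP => i j; rewrite !mxE !big_ord_recl !big_ord0 !mxE; move: i j; ordT; ordT; rewrite /=; ring.
- apply/matrixP => i j; rewrite !mxE !big_ord_recl !big_ord0 !mxE; move: i j; ordT; ordT; rewrite /=; ring.
Qed.
Lemma F2inv (W : P) : 2 * W = 1 -> mx_invertible F2.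
Proof.
move=> hW; apply: (@inv_from _ _ (G2 W) W hW).
- apply/matrixP => i j; rewrite !mxE !big_ord_recl !big_ord0 !mxE; move: i j; ordT; ordT; rewrite /=; ring.
- apply/matrixP => i j; rewrite !mxE !big_ord_recl !big_ord0 !mxE; move: i j; ordT; ordT; rewrite /=; ring.
Qed.
Lemma F3inv (W : P) : 2 * W = 1 -> mx_invertible F3.
Proof.
move=> hW; apply: (@inv_from _ _ (G3 W) W hW).
- apply/matrixP => i j; rewrite !mxE !big_ord_recl !big_ord0 !mxE; move: i j; ordT; ordT; rewrite /=; ring.
- apply/matrixP => i j; rewrite !mxE !big_ord_recl !big_ord0 !mxE; move: i j; ordT; ordT; rewrite /=; ring.
Qed.
Lemma F0inv : mx_invertible F0.
Proof. by exists 1%:M; rewrite /F0 mulmx1. Qed.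


End Main.

Arguments comp_mpoly : simpl never.
Ltac ordT := case=> [[|[|[|[|[|[|[|[|[|[|[|[|[|[|[|[|[|[|?]]]]]]]]]]]]]]]]]] ?];
  try (exfalso; match goal with H : is_true (_ < _)%N |- _ => move: H; rewrite !ltnS ltn0; done end).
Section Main2.
Variable R : comNzRingType.
Local Notation P := {mpoly R[17]}.
Local Notation muT := (muT R).
Notation muF := (comp_mpoly muT).
Lemma comp_mpoly_comp (lq lr : 17.-tuple P) (p : P) :
  (p \mPo lq) \mPo lr = p \mPo [tuple (tnth lq i \mPo lr) | i < 17].
Proof.
rewrite (comp_mpolyEX p lq) (comp_mpolyEX p) raddf_sum /=; apply: eq_bigr => m _.
rewrite comp_mpolyZ; congr (_ *: _); rewrite !comp_mpolyX rmorph_prod /=.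
by apply: eq_bigr => i _; rewrite rmorphXn tnth_map tnth_ord_tuple.
Qed.

Definition nuT (W : P) : 17.-tuple P :=
  [tuple W * l13 R; -(W * l12 R); a11 R; W * l11 R; a12 R; a13 R;
         W * l23 R; -(W * l22 R); a21 R; W * l21 R; a22 R; a23 R;
         -(W * z2 R); p12 R; p13 R; p23 R;
         z1 R + (a11 R * (W * l21 R) - a12 R * (-(W * l22 R)) + a13 R * (W * l23 R))
              - (a21 R * (W * l11 R) - a22 R * (-(W * l12 R)) + a23 R * (W * l13 R))].

Lemma surj (w : R) : 2 * w = 1 -> forall p : P, exists q, muF q = p.
Proof.
move=> hw p; set W : P := w%:MP.
have hW : 2 * W = 1.
  by rewrite /W -[2 : P]/(1 *+ 2) -mpolyC1 -mpolyCMn -mpolyCM hw.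
have hV : forall a : P, W * (2 * a) = a by move=> a; rewrite mulrA (mulrC W) hW mul1r.
have muW : muF W = W by apply: muC.
have muW' : (muF : {rmorphism P -> P}) W = W := muW.
have Xord : forall k (H : (k < 17)%N), 'X_(Ordinal H) = 'X_(inord k) :> P.
  by move=> k H; rewrite (_ : Ordinal H = inord k) //; apply: val_inj; rewrite /= inordK.
exists (p \mPo nuT W); rewrite comp_mpoly_comp.
suff -> : [tuple (tnth (nuT W) i \mPo muT) | i < 17] = [tuple 'X_i | i < 17] by apply: comp_mpoly_id.
apply: eq_from_tnth => i; rewrite !tnth_map !tnth_ord_tuple; move: i; ordT; rewrite /=;
  rewrite ?(rmorphM, rmorphN, rmorphD, rmorphB) ?muW ?muW' ?(mu_a11, mu_a12, mu_a13, mu_a21, mu_a22, mu_a23,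
     mu_l11, mu_l12, mu_l13, mu_l21, mu_l22, mu_l23, mu_p12, mu_p13, mu_p23, mu_z1, mu_z2)
  ?(mu_a11', mu_a12', mu_a13', mu_a21', mu_a22', mu_a23',
     mu_l11', mu_l12', mu_l13', mu_l21', mu_l22', mu_l23', mu_p12', mu_p13', mu_p23', mu_z1', mu_z2') ?hV.
all: rewrite ?hV ?opprK Xord /x12 /x13 /x14 /x23 /x24 /x34 /y12 /y13 /y14 /y23 /y24 /y34 /z123 /z124 /z134 /z234 /t.
all: ring.
Qed.

End Main2.

Theorem theorem4p5 (R0 : comNzRingType) (hnoeth : noetherian R0)
    (h2 : exists v : R0, 2 * v = 1) :
  exists mu : {mpoly R0[17]} -> {mpoly R0[17]},
    [/\ is_alg_hom mu,
        (forall p : {mpoly R0[17]}, exists q, mu q = p) &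
        cx_iso (map_mx mu (Qd1 R0)) (map_mx mu (Qd2 R0)) (map_mx mu (Qd3 R0))
               (Md1 R0) (Md2 R0) (Md3 R0)].
Proof.
case: h2 => v hv.
have hW : 2 * (v%:MP : {mpoly R0[17]}) = 1.
  by rewrite -[2 : {mpoly R0[17]}]/(1 *+ 2) -mpolyC1 -mpolyCMn -mpolyCM hv.
exists (comp_mpoly (muT R0)); split.
- split => [p q|p q||c]; [exact: rmorphD | exact: rmorphM | exact: rmorph1 | exact: comp_mpolyC].
- exact: (surj _ _ hv).
- exists (F0 R0), (F1 R0), (F2 R0), (F3 R0); split.
  + exact: F0inv.
  + exact: (F1inv _ _ hW).
  + exact: (F2inv _ _ hW).
  + exact: (F3inv _ _ hW).
  + split; [rewrite (muQ1 R0); exact: (eq1 R0) | rewrite (muQ2 R0); exact: (eq2 R0)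
           | rewrite (muQ3 R0); exact: (eq3 R0)].
Qed.
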